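(* Let $A$ be a real $n\times n$ matrix and $\mathbf{c},\mathbf{d}\in\mathbb{R}^n$ with $A+A^T=\mathbf{c}\mathbf{d}^T$, and let $K=A-\tfrac12\mathbf{c}\mathbf{d}^T$. Let $\lambda\in\mathbb{R}$ and let $(\mathbf{x},\pi)$ be an optimal solution of $LP(\lambda)$. Then for every $\mathbf{v}\in\mathbb{R}^n$ with $\mathbf{v}^T\mathbf{x}=\lambda$, the probability vector $\mathbf{x}$ is a symmetric Nash equilibrium of the bimatrix game $(Z,Z^T)$, where $Z=K+\tfrac12\mathbf{c}\mathbf{v}^T$.
   Context: For fixed $\lambda\in\mathbb{R}$, $LP(\lambda)$ is the linear program in variables $\mathbf{x}\in\mathbb{R}^n,\pi\in\mathbb{R}$: maximize $\tfrac12\lambda\,\mathbf{x}^T\mathbf{c}-\pi$ subject to $K\mathbf{x}+\tfrac{\lambda}{2}\mathbf{c}\le\pi\mathbf{1}$ (componentwise), $\mathbf{x}\ge0$, $\sum_ix_i=1$; $\mathbf{1}$ is the all-ones vector. For a square matrix $Z$, a probability vector $\mathbf{x}$ is a symmetric Nash equilibrium of $(Z,Z^T)$ if $(\mathbf{x},\mathbf{x})$ is a Nash equilibrium, equivalently, $x_i>0$ implies $(Z\mathbf{x})_i=\max_k(Z\mathbf{x})_k$. *)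

(* Defs.v *)
(* Real numbers are modelled by an arbitrary realFieldType
   (the statement is purely order-algebraic). *)
From HB Require Import structures.
From mathcomp Require Import all_boot all_order all_algebra.
Set Implicit Arguments. Unset Strict Implicit. Unset Printing Implicit Defensive.
Import Order.TTheory GRing.Theory Num.Theory.
Local Open Scope ring_scope.

Definition ones (R : realFieldType) (n : nat) : 'cV[R]_n := const_mx 1.

Definition prob_vec (R : realFieldType) (n : nat) (x : 'cV[R]_n) : Prop :=
  (forall i, 0 <= x i 0) /\ \sum_i x i 0 = 1.

Definition LP_feasible (R : realFieldType) (n : nat) (K : 'M[R]_n) (c : 'cV[R]_n)
    (lam : R) (x : 'cV[R]_n) (pi : R) : Prop :=
  (forall i, (K *m x + (lam / 2%:R) *: c) i 0 <= (pi *: ones R n) i 0) /\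
  prob_vec x.

Definition LP_obj (R : realFieldType) (n : nat) (c : 'cV[R]_n) (lam : R)
    (x : 'cV[R]_n) (pi : R) : R :=
  (1 / 2%:R) * lam * (x^T *m c) 0 0 - pi.

Definition LP_optimal (R : realFieldType) (n : nat) (K : 'M[R]_n) (c : 'cV[R]_n)
    (lam : R) (x : 'cV[R]_n) (pi : R) : Prop :=
  LP_feasible K c lam x pi /\
  forall (x' : 'cV[R]_n) (pi' : R), LP_feasible K c lam x' pi' ->
    LP_obj c lam x' pi' <= LP_obj c lam x pi.

(* x is a symmetric Nash equilibrium of the bimatrix game (Z, Z^T):
   x is a probability vector and x_i > 0 implies (Z x)_i = max_k (Z x)_k *)
Definition sym_nash (R : realFieldType) (n : nat) (Z : 'M[R]_n) (x : 'cV[R]_n) : Prop :=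
  prob_vec x /\
  forall i, 0 < x i 0 -> forall k, (Z *m x) k 0 <= (Z *m x) i 0.

(* Main.v *)
Require Import Defs.
From HB Require Import structures.
From mathcomp Require Import all_boot all_order all_algebra.
From mathcomp Require Import ring lra.
Import Order.TTheory GRing.Theory Num.Theory.
Local Open Scope ring_scope.

Section Farkas.
Variable R : realFieldType.

Lemma sum_ind (I : finType) (p : I) (F : I -> R) :
  \sum_i (i == p)%:R * F i = F p.
Proof.
rewrite (bigD1 p) //= eqxx mul1r big1 ?addr0 // => i /negbTE ->; by rewrite mul0r.
Qed.

Lemma sum_ind' (I : finType) (p : I) (F : I -> R) :
  \sum_i F i * (p == i)%:R = F p.
Proof.
rewrite (bigD1 p) //= eqxx mulr1 big1 ?addr0 // => i; rewrite eq_sym => /negbTE ->; by rewrite mulr0.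
Qed.

Definition Wf (I : finType) (an : I -> R) (j : (I + I * I)%type) : I -> R :=
  match j with
  | inl i => fun i' => if an i == 0 then (i' == i)%:R else 0
  | inr pq => fun i' => if (0 < an pq.1) && (an pq.2 < 0)
        then (i' == pq.1)%:R * (- an pq.2) + (i' == pq.2)%:R * an pq.1 else 0
  end.

Arguments Wf {I}.
Lemma Wf_ge0 I an j i : 0 <= @Wf I an j i.
Proof.
case: j => [i0|[p q]] /=; first by case: ifP.
case: ifP => // /andP [hp hq].
apply: addr_ge0; apply: mulr_ge0 => //; rewrite ?ler0n ?oppr_ge0; apply: ltW => //.
Qed.

Lemma Wf_an I an j : \sum_i @Wf I an j i * an i = 0.
Proof.
case: j => [i0|[p q]] /=.
  have [h|h] := eqVneq (an i0) 0.
    by rewrite sum_ind.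
  by rewrite big1 // => *; rewrite mul0r.
case: (boolP ((0 < an p) && (an q < 0))) => h; last first.
  by rewrite big1 // => *; rewrite mul0r.
under eq_bigr => i _ do rewrite mulrDl -!mulrA.
rewrite big_split /= !sum_ind. ring.
Qed.

Lemma sum_ind2 (I : finType) (p q : I) (u v : R) (F : I -> R) :
  \sum_i ((i == p)%:R * u + (i == q)%:R * v) * F i = u * F p + v * F q.
Proof.
under eq_bigr => i _ do rewrite mulrDl -!mulrA.
by rewrite big_split /= !sum_ind.
Qed.

Lemma sum_lin (J : finType) (u v : R) (f g x : J -> R) :
  \sum_k (u * f k + v * g k) * x k = u * \sum_k f k * x k + v * \sum_k g k * x k.
Proof.
rewrite !mulr_sumr -big_split /=; apply: eq_bigr => k _; ring.
Qed.

Lemma farkas n : forall (I : finType) (a : I -> 'I_n -> R) (b : I -> R),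
  (exists x : 'I_n -> R, forall i, \sum_k a i k * x k <= b i) \/
  (exists l : I -> R, (forall i, 0 <= l i) /\ (forall k, \sum_i l i * a i k = 0)
      /\ \sum_i l i * b i < 0).
Proof.
elim: n => [|n IH] I a b.
  case: (pickP (fun i => b i < 0)) => [i0 hi0 | hno].
    right; exists (fun i => (i == i0)%:R); split; first by move=> i; rewrite ler0n.
    split; first by case.
    by rewrite sum_ind.
  left; exists (fun _ => 0) => i; rewrite big_ord0.
  by move: (hno i) => /= /negbT; rewrite -leNgt.
pose an i := a i ord_max.
pose a' i (k : 'I_n) := a i (widen_ord (leqnSn n) k).
have hw k : widen_ord (leqnSn n) k = lift ord_max k by apply: val_inj; rewrite /= /bump leqNgt ltn_ord.
pose a2 (j : (I + I * I)%type) (k : 'I_n) := \sum_i Wf an j i * a' i k.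
pose b2 (j : (I + I * I)%type) := \sum_i Wf an j i * b i.
case: (IH _ a2 b2) => [[x' hx'] | [l' [hl'0 [hl'a hl'b]]]]; last first.
  right; exists (fun i => \sum_j l' j * Wf an j i); split.
    by move=> i; apply: sumr_ge0 => j _; apply: mulr_ge0 => //; apply: Wf_ge0.
  have swap (f : I -> R) : \sum_i (\sum_j l' j * Wf an j i) * f i =
                            \sum_j l' j * \sum_i Wf an j i * f i.
    under eq_bigr => i _ do rewrite mulr_suml.
    rewrite exchange_big /=; apply: eq_bigr => j _; rewrite mulr_sumr.
    by apply: eq_bigr => i _; rewrite mulrA.
  split.
    move=> k; rewrite swap; case: (unliftP ord_max k) => [k'|] ->.
      rewrite -[RHS](hl'a k'); apply: eq_bigr => j _; congr (_ * _).
      by apply: eq_bigr => i _; rewrite /a' hw.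
    by rewrite big1 // => j _; rewrite Wf_an mulr0.
  by rewrite swap.
pose e i := b i - \sum_k a' i k * x' k.
have H0 i : an i = 0 -> 0 <= e i.
  move=> h; move: (hx' (inl i)); rewrite /a2 /b2 /= h eqxx.
  under eq_bigr => k _ do rewrite sum_ind.
  by rewrite sum_ind subr_ge0.
have Hpq p q : 0 < an p -> an q < 0 -> 0 <= - an q * e p + an p * e q.
  move=> hp hq; move: (hx' (inr (p, q))); rewrite /a2 /b2 /= hp hq /=.
  rewrite sum_ind2 (eq_bigr (fun k => (- an q * a' p k + an p * a' q k) * x' k) _) => [|k _]; last by rewrite sum_ind2.
  rewrite sum_lin /e => h; lra.
pose x (k : 'I_n.+1) (t : R) := if unlift ord_max k is Some k' then x' k' else t.
suff [t ht] : exists t, forall i, an i * t <= e i.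
  left; exists (fun k => x k t) => i; rewrite big_ord_recr /= /x unlift_none.
  under eq_bigr => k _ do rewrite hw liftK.
  have ee : \sum_k a' i k * x' k = \sum_k a i (lift ord_max k) * x' k.
    by apply: eq_bigr => k _; rewrite /a' hw.
  move: (ht i); rewrite /e ee /an; lra.
case: (pickP (fun q => an q < 0)) => [q0 hq0 | hno].
  case: (@arg_maxP _ _ _ q0 (fun q => an q < 0) (fun q => e q / an q) hq0) => q hq hmax.
  exists (e q / an q) => i.
  have hq0' : an q != 0 by rewrite ltr0_neq0.
  have eE k : an k != 0 -> e k = an k * (e k / an k).
    by move=> hk; rewrite mulrCA mulfV // mulr1.
  case: (ltgtP (an i) 0) => hi.
  - by rewrite (eE i (ltr0_neq0 hi)) ler_nM2l //; apply: hmax.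
  - rewrite (eE i (lt0r_neq0 hi)) ler_pM2l //.
    have h := Hpq i q hi hq; rewrite (eE i (lt0r_neq0 hi)) (eE q hq0') in h.
    set u := e q / an q in h *; set v := e i / an i in h *.
    have hq' : 0 < - an q by rewrite oppr_gt0.
    rewrite -subr_ge0 -(pmulr_rge0 _ (mulr_gt0 hi hq')).
    have -> : (an i * - an q) * (v - u) = - an q * (an i * v) + an i * (an q * u) by ring.
    exact: h.
  - by rewrite hi mul0r; apply: H0.
exists (- \sum_i `|e i / an i|) => i.
have eE k : an k != 0 -> e k = an k * (e k / an k).
  by move=> hk; rewrite mulrCA mulfV // mulr1.
case: (ltgtP (an i) 0) => hi.
- by move: (hno i); rewrite hi.
- rewrite (eE i (lt0r_neq0 hi)) ler_pM2l //.
  have : `|e i / an i| <= \sum_i `|e i / an i|.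
    by rewrite (bigD1 i) //= lerDl sumr_ge0.
  move: (ler_norm (- (e i / an i))); rewrite normrN; lra.
- by rewrite hi mul0r; apply: H0.
Qed.

Lemma skew_sol n (M : 'I_n -> 'I_n -> R) : (0 < n)%N ->
  (forall i j, M i j + M j i = 0) ->
  exists y : 'I_n -> R, (forall i, 0 <= y i) /\ \sum_i y i = 1 /\
    forall i, \sum_j M i j * y j <= 0.
Proof.
move=> hn hM.
pose a (r : ('I_n + 'I_n + bool)%type) (k : 'I_n) : R :=
  match r with inl (inl i) => - (k == i)%:R | inl (inr i) => M i k
  | inr true => 1 | inr false => -1 end.
pose b (r : ('I_n + 'I_n + bool)%type) : R :=
  match r with inr true => 1 | inr false => -1 | _ => 0 end.
have hsum (F : ('I_n + 'I_n + bool)%type -> R) : \sum_r F r =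
   \sum_i F (inl (inl i)) + \sum_i F (inl (inr i)) + (F (inr true) + F (inr false)).
  by rewrite big_sumType /= big_sumType /= big_bool.
case: (@farkas n _ a b) => [[y hy]|[l [hl0 [hla hlb]]]].
  exists y; split; [|split].
  - move=> i; move: (hy (inl (inl i))) => /=.
    under eq_bigr => k _ do rewrite mulNr.
    by rewrite sumrN sum_ind oppr_le0.
  - move: (hy (inr true)) (hy (inr false)) => /=.
    under eq_bigr => k _ do rewrite mul1r.
    have -> : \sum_k -1 * y k = - \sum_k y k.
      by rewrite -sumrN; apply: eq_bigr => k _; rewrite mulN1r.
    lra.
  - by move=> i; move: (hy (inl (inr i))).
exfalso.
move: hlb; rewrite hsum /= big1; last by move=> i _; rewrite mulr0.
rewrite big1; last by move=> i _; rewrite mulr0.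
move=> hlb.
pose nu i := l (inl (inr i)).
pose S k := \sum_i nu i * M i k.
have hS k : l (inr false) - l (inr true) <= S k.
  move: (hla k); rewrite hsum /=.
  under eq_bigr => i _ do rewrite mulrN.
  rewrite sumrN.
  rewrite sum_ind' => h.
  have := hl0 (inl (inl k)); rewrite /S /nu; lra.
have hSpos k : 0 < S k by apply: lt_le_trans (hS k); lra.
have hQ : \sum_k nu k * S k = 0.
  have e1 : \sum_k nu k * S k = \sum_k \sum_i nu i * nu k * M i k.
    apply: eq_bigr => k _; rewrite /S mulr_sumr; apply: eq_bigr => i _; ring.
  have e2 : \sum_k \sum_i nu i * nu k * M i k = - \sum_k \sum_i nu i * nu k * M i k.
    rewrite -sumrN exchange_big /=; apply: eq_bigr => i _; rewrite -sumrN.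
    apply: eq_bigr => k _; have -> : M i k = - M k i by have := hM i k; lra.
    ring.
  rewrite e1; move: e2; lra.
have hnu k : nu k = 0.
  have hz : nu k * S k = 0.
    apply: (psumr_eq0P _ hQ) => // i _; apply: mulr_ge0; [apply: hl0 | apply: ltW; apply: hSpos].
  move: hz => /eqP; rewrite mulf_eq0 => /orP [/eqP //| /eqP h].
  by move: (hSpos k); rewrite h ltxx.
have := hSpos (Ordinal hn); rewrite /S big1 ?ltxx // => i _; by rewrite hnu mul0r.
Qed.

Lemma skew_quad (I : finType) (K : I -> I -> R) (u : I -> R) :
  (forall i j, K i j + K j i = 0) -> \sum_i u i * \sum_j K i j * u j = 0.
Proof.
move=> hK.
have e1 : \sum_i u i * \sum_j K i j * u j = \sum_i \sum_j u i * u j * K i j.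
  apply: eq_bigr => i _; rewrite mulr_sumr; apply: eq_bigr => j _; ring.
have e2 : \sum_i \sum_j u i * u j * K i j = - \sum_i \sum_j u i * u j * K i j.
  rewrite -sumrN exchange_big /=; apply: eq_bigr => j _; rewrite -sumrN.
  apply: eq_bigr => i _; have -> : K i j = - K j i by have := hK i j; lra.
  ring.
rewrite e1; move: e2; lra.
Qed.

Lemma sum3 (I : finType) (f g y : I -> R) (c0 : R) :
  \sum_j (f j + c0 - g j) * y j = \sum_j f j * y j + c0 * \sum_j y j - \sum_j g j * y j.
Proof.
rewrite mulr_sumr -big_split -sumrB /=; apply: eq_bigr => j _; ring.
Qed.
End Farkas.

Theorem lemma4p4 (R : realFieldType) (n : nat) (A : 'M[R]_n) (c d : 'cV[R]_n)
    (hA : A + A^T = c *m d^T) (lam : R) (x : 'cV[R]_n) (pi : R)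
    (hopt : LP_optimal (A - (1 / 2%:R) *: (c *m d^T)) c lam x pi) :
  forall v : 'cV[R]_n, (v^T *m x) 0 0 = lam ->
    sym_nash ((A - (1 / 2%:R) *: (c *m d^T)) + (1 / 2%:R) *: (c *m v^T)) x.
Proof.
move=> v hv.
have hAe i j : A i j + A j i = (c *m d^T) i j.
  by have := congr1 (fun M : 'M[R]_n => M i j) hA; rewrite !mxE.
set K := A - (1 / 2%:R) *: (c *m d^T) in hopt *.
have hK i j : K i j + K j i = 0.
  rewrite /K !mxE; have := hAe i j; have := hAe j i; rewrite !mxE; lra.
clearbody K.
case: hopt => [[hfeas [hx0 hx1]] hmax].
have hn : (0 < n)%N.
  case: (ltnP 0 n) => // hn; exfalso; move: hx1; rewrite big1.
    by move/eqP; rewrite eq_sym oner_eq0.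
  by move=> i _; have := leq_trans (ltn_ord i) hn.
pose aa (j : 'I_n) := lam / 2%:R * c j 0.
pose M i j := K i j + aa i - aa j.
have [y [hy0 [hy1 hyM]]] := @skew_sol R n M hn (fun i j => ltac:(rewrite /M; have := hK i j; lra)).
pose y' : 'cV[R]_n := \col_i y i.
pose pi' := \sum_j aa j * y j.
have hKy i : (K *m y') i 0 = \sum_j K i j * y j.
  by rewrite mxE; apply: eq_bigr => j _; rewrite mxE.
have feas' : LP_feasible K c lam y' pi'.
  split; last first.
    split; first by move=> i; rewrite mxE.
    by rewrite -hy1; apply: eq_bigr => i _; rewrite mxE.
  move=> i; rewrite mxE [X in _ <= X]mxE hKy !mxE mulr1.
  move: (hyM i); rewrite /M sum3 hy1 mulr1 /pi' /aa; lra.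
have hobj' : LP_obj c lam y' pi' = 0.
  rewrite /LP_obj /pi' mxE.
  have -> : \sum_j y'^T 0 j * c j 0 = \sum_j y j * c j 0.
    by apply: eq_bigr => j _; rewrite !mxE.
  rewrite !mulr_sumr -sumrB big1 // => j _; rewrite /aa; ring.
have hobj := hmax _ _ feas'; rewrite hobj' /LP_obj mxE in hobj.
pose w i := (K *m x) i 0 + lam / 2%:R * c i 0.
have hKx i : (K *m x) i 0 = \sum_j K i j * x j 0 by rewrite mxE.
have hw i : w i <= pi.
  by move: (hfeas i); rewrite mxE [X in _ <= X]mxE !mxE mulr1 /w hKx.
have hxc : \sum_j x^T 0 j * c j 0 = \sum_j x j 0 * c j 0.
  by apply: eq_bigr => j _; rewrite !mxE.
have hsum : \sum_i x i 0 * (pi - w i) = 0.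
  apply/eqP; rewrite eq_le; apply/andP; split; last first.
    by apply: sumr_ge0 => i _; apply: mulr_ge0 => //; rewrite subr_ge0.
  have -> : \sum_i x i 0 * (pi - w i) =
     pi * \sum_i x i 0 - \sum_i x i 0 * \sum_j K i j * x j 0
       - lam / 2%:R * \sum_i x i 0 * c i 0.
    rewrite !mulr_sumr -!sumrB; apply: eq_bigr => i _; rewrite /w hKx; ring.
  rewrite (@skew_quad R _ K (fun i => x i 0) hK) hx1; move: hobj; rewrite hxc; lra.
have hwi i : 0 < x i 0 -> w i = pi.
  move=> hi; have h0 : x i 0 * (pi - w i) = 0.
    by apply: (psumr_eq0P _ hsum) => // j _; apply: mulr_ge0 => //; rewrite subr_ge0.
  by move: h0 => /eqP; rewrite mulf_eq0 gt_eqF //= subr_eq0 => /eqP ->.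
have hZ k : (((K + (1 / 2%:R) *: (c *m v^T)) *m x) k 0) = w k.
  rewrite mulmxDl -scalemxAl -mulmxA mxE [X in _ + X]mxE mxE -hKx [(c *m _) k 0]mxE big_ord1 hv /w; ring.
split; first by [].
move=> i hi k; rewrite !hZ (hwi i hi); exact: hw.
Qed.
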